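(* Let $P=\sum_{k\in\mathbb{Z}}\alpha_kx^k+\sum_{k\in\mathbb{Z}}\beta_k\,yx^k$ (finitely many nonzero terms) with all $\alpha_k,\beta_k\in\mathbb{R}$, and suppose $P$ is reciprocal as an element of $\mathbb{R}[\mathbb{Z}\times\mathbb{Z}/2\mathbb{Z}]$, where $\mathbb{Z}\times\mathbb{Z}/2\mathbb{Z}=\langle x,y\mid y^2,[x,y]\rangle$. Regard $P$ also as an element of $\mathbb{C}[D_\infty]$, where $D_\infty=\langle x,y\mid y^2,yxyx\rangle$ (same coefficients, same words). Let $k=\sum_k(|\alpha_k|+|\beta_k|)$ and $|\lambda|<1/k$. Then \[ m_{\mathbb{Z}\times\mathbb{Z}/2\mathbb{Z}}(P,\lambda)=m_{D_\infty}(P,\lambda). \]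
   Context: For a group $\Gamma$ and $Q=\sum_{g\in\Gamma}c_g g\in\mathbb{C}\Gamma$ (finite sum), the reciprocal is $Q^*=\sum_g\overline{c_g}\,g^{-1}$, and $Q$ is reciprocal if $Q=Q^*$. For reciprocal $P\in\mathbb{C}\Gamma$ with $l_1$-norm $k=\sum_g|c_g|$ and $|\lambda|<1/k$, define $m_\Gamma(P,\lambda)=-\sum_{n\ge1}a_n\lambda^n/n$, where $a_n$ is the coefficient of the identity element of $\Gamma$ in $P^n$. In the paper $D_\infty$ is written $\langle\rho,\sigma\mid\sigma^2,\sigma\rho\sigma\rho\rangle$ with $x=\rho$, $y=\sigma$. *)

(* Defs.v *)
From Stdlib Require Import Reals ZArith List Bool.
From Coquelicot Require Export Coquelicot.
Import ListNotations.

(* Group elements of both Z x Z/2Z and D_infty are written uniquely as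
   normal words  y^b x^k  with b : bool, k : Z; encoded as the pair (b, k). *)
Definition elt : Type := (bool * Z)%type.

Definition elt_eqb (g h : elt) : bool :=
  Bool.eqb (fst g) (fst h) && Z.eqb (snd g) (snd h).

Definition elt_one : elt := (false, 0%Z).

(* Z x Z/2Z = <x, y | y^2, [x,y]> : (y^a x^k)(y^b x^l) = y^(a+b) x^(k+l). *)
Definition mulZ2 (g h : elt) : elt :=
  (xorb (fst g) (fst h), (snd g + snd h)%Z).
Definition invZ2 (g : elt) : elt := (fst g, (- snd g)%Z).

(* D_infty = <x, y | y^2, yxyx> : x^k y = y x^(-k), hence
   (y^a x^k)(y^b x^l) = y^(a+b) x^((-1)^b k + l). *)
Definition mulD (g h : elt) : elt :=
  (xorb (fst g) (fst h), ((if fst h then - snd g else snd g) + snd h)%Z).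
Definition invD (g : elt) : elt :=
  if fst g then g else (false, (- snd g)%Z).

(* An element of the complex group algebra, as a finite formal sum
   sum_i c_i g_i  (list of (coefficient, group element)). *)
Definition galg : Type := list (C * elt).

Definition gmul (mul : elt -> elt -> elt) (p q : galg) : galg :=
  flat_map (fun a => map (fun b => (Cmult (fst a) (fst b), mul (snd a) (snd b))) q) p.

Fixpoint gpow (mul : elt -> elt -> elt) (p : galg) (n : nat) : galg :=
  match n with
  | O => [(RtoC 1, elt_one)]
  | S m => gmul mul p (gpow mul p m)
  end.

Definition coeff (p : galg) (g : elt) : C :=
  fold_right Cplus (RtoC 0)
    (map fst (filter (fun a => elt_eqb (snd a) g) p)).

(* reciprocal Q* = sum conj(c_g) g^-1 ; Q reciprocal iff Q = Q*,
   i.e. coefficientwise  c_g = conj (c_{g^-1}). *)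
Definition reciprocal (inv : elt -> elt) (p : galg) : Prop :=
  forall g : elt, coeff p g = Cconj (coeff p (inv g)).

Definition a_coef (mul : elt -> elt -> elt) (p : galg) (n : nat) : C :=
  coeff (gpow mul p n) elt_one.

Definition mahler_is (mul : elt -> elt -> elt) (p : galg) (lam : C) (l : C) : Prop :=
  is_series (V := C_NormedModule)
    (fun n : nat =>
       Copp (Cdiv (Cmult (a_coef mul p (S n)) (Cpow lam (S n))) (RtoC (INR (S n)))))
    l.

Definition zrange (N : nat) : list Z :=
  map (fun i => (Z.of_nat i - Z.of_nat N)%Z) (seq 0 (2 * N + 1)).

Definition Pelt (alpha beta : Z -> R) (N : nat) : galg :=
  flat_map (fun k => [(RtoC (alpha k), (false, k)); (RtoC (beta k), (true, k))])
    (zrange N).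

Definition l1norm (alpha beta : Z -> R) (N : nat) : R :=
  fold_right Rplus 0%R (map (fun k => (Rabs (alpha k) + Rabs (beta k))%R) (zrange N)).

(* Main.v *)
Require Import Defs.
From Stdlib Require Import Reals ZArith List Permutation Lia Lra Bool.
From Coquelicot Require Import Coquelicot.
Import ListNotations.
Open Scope C_scope.

Definition csum {A} (l : list A) (F : A -> C) : C := fold_right Cplus 0 (map F l).

Lemma csum_app {A} (l1 l2 : list A) F : csum (l1 ++ l2) F = csum l1 F + csum l2 F.
Proof. induction l1; simpl; unfold csum in *; simpl. ring. rewrite IHl1. ring. Qed.

Lemma csum_ext {A} (l : list A) F G : (forall x, In x l -> F x = G x) -> csum l F = csum l G.
Proof. intro H. unfold csum. f_equal. apply map_ext_in. auto. Qed.

Lemma csum_plus {A} (l : list A) F G : csum l (fun x => F x + G x) = csum l F + csum l G.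
Proof. induction l; unfold csum in *; simpl. ring. rewrite IHl. ring. Qed.

Lemma csum_perm {A} (l l' : list A) F : Permutation l l' -> csum l F = csum l' F.
Proof. induction 1; unfold csum in *; simpl; try ring. rewrite IHPermutation; ring.
  rewrite IHPermutation1; auto. Qed.

Lemma csum_map {A B} (l : list A) (f : A -> B) F : csum (map f l) F = csum l (fun x => F (f x)).
Proof. unfold csum. rewrite map_map. auto. Qed.

Lemma coeff_csum p g : coeff p g = csum p (fun a => if elt_eqb (snd a) g then fst a else 0).
Proof. induction p; unfold coeff, csum in *; simpl. auto.
  destruct (elt_eqb (snd a) g); simpl; rewrite IHp; auto. ring. Qed.

Lemma csum_flat_map {A B} (l : list A) (f : A -> list B) F :
  csum (flat_map f l) F = csum l (fun x => csum (f x) F).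
Proof. induction l; simpl. auto. rewrite csum_app, IHl. unfold csum; simpl. auto. Qed.

Lemma csum_scal {A} (l : list A) c F : csum l (fun x => c * F x) = c * csum l F.
Proof. induction l; unfold csum in *; simpl. ring. rewrite IHl. ring. Qed.

Lemma elt_eqb_spec x y : elt_eqb x y = true <-> x = y.
Proof. destruct x as [a k], y as [b l]. unfold elt_eqb; simpl.
  rewrite andb_true_iff, eqb_true_iff, Z.eqb_eq. split. intros [-> ->]; auto.
  intro H; inversion H; auto. Qed.

Lemma coeff_gmul mul ldiv (Hm : forall a b g, mul a b = g <-> b = ldiv a g) p q g :
  coeff (gmul mul p q) g = csum p (fun a => fst a * coeff q (ldiv (snd a) g)).
Proof.
  rewrite coeff_csum. unfold gmul. rewrite csum_flat_map. apply csum_ext. intros a _.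
  rewrite csum_map, coeff_csum, <- csum_scal. apply csum_ext. intros b _. simpl.
  assert (E : elt_eqb (mul (snd a) (snd b)) g = elt_eqb (snd b) (ldiv (snd a) g)).
  { apply eq_iff_eq_true. rewrite !elt_eqb_spec. apply Hm. }
  rewrite E. destruct (elt_eqb (snd b) (ldiv (snd a) g)); simpl. reflexivity. rewrite Cmult_0_r. reflexivity. Qed.

Definition ldivZ (a g : elt) : elt := (xorb (fst a) (fst g), (snd g - snd a)%Z).
Definition ldivD (a g : elt) : elt :=
  let b := xorb (fst a) (fst g) in (b, (snd g - (if b then - snd a else snd a))%Z).

Lemma HmZ a b g : mulZ2 a b = g <-> b = ldivZ a g.
Proof. destruct a as [a1 a2], b as [b1 b2], g as [g1 g2]; unfold mulZ2, ldivZ; simpl.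
  destruct a1, b1, g1; simpl; split; intro H; inversion H; subst; f_equal; lia. Qed.

Lemma HmD a b g : mulD a b = g <-> b = ldivD a g.
Proof. destruct a as [a1 a2], b as [b1 b2], g as [g1 g2]; unfold mulD, ldivD; simpl.
  destruct a1, b1, g1; simpl; split; intro H; inversion H; subst; f_equal; lia. Qed.
Lemma in_zrange N k : In k (zrange N) <-> (- Z.of_nat N <= k <= Z.of_nat N)%Z.
Proof. unfold zrange. rewrite in_map_iff. split.
  - intros [i [<- Hi]]. apply in_seq in Hi. lia.
  - intro H. exists (Z.to_nat (k + Z.of_nat N)). split. lia. apply in_seq. lia. Qed.

Lemma nodup_zrange N : NoDup (zrange N).
Proof. unfold zrange. apply FinFun.Injective_map_NoDup. intros x y H. lia. apply seq_NoDup. Qed.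

Lemma csum_neg N F : csum (zrange N) F = csum (zrange N) (fun k => F (- k)%Z).
Proof. rewrite <- (csum_map _ Z.opp F). apply csum_perm. symmetry.
  apply Permutation_map_same_l.
  - apply FinFun.Injective_map_NoDup. intros x y H. lia. apply nodup_zrange.
  - intros x Hx. apply in_map_iff in Hx. destruct Hx as [y [<- Hy]].
    apply in_zrange in Hy. apply in_zrange. lia. Qed.

Lemma csum_Pelt alpha beta N G : csum (Pelt alpha beta N) G =
  csum (zrange N) (fun k => G (RtoC (alpha k), (false, k)) + G (RtoC (beta k), (true, k))).
Proof. unfold Pelt. rewrite csum_flat_map. apply csum_ext. intros. unfold csum. simpl. ring. Qed.

Lemma csum_delta_in (l : list Z) k f : NoDup l -> In k l ->
  csum l (fun j => if Z.eqb j k then f j else 0) = f k.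
Proof. induction l as [|a l IH]; intros Hn Hi. destruct Hi.
  inversion Hn; subst. unfold csum in *; simpl. destruct Hi as [<- | Hi].
  - rewrite Z.eqb_refl. assert (E : fold_right Cplus 0 (map (fun j => if Z.eqb j a then f j else 0) l) = 0).
    { clear IH Hn. induction l as [|b l IH2]. auto. simpl. destruct (Z.eqb_spec b a). exfalso; apply H1; left; auto.
      rewrite IH2. ring. all: try (intro Hx; apply H1; right; exact Hx). all: try (inversion H2; auto). }
    rewrite E. ring.
  - rewrite IH; auto. destruct (Z.eqb_spec a k). subst; tauto. ring. Qed.

Lemma csum_delta_out (l : list Z) k f : ~ In k l ->
  csum l (fun j => if Z.eqb j k then f j else 0) = 0.
Proof. induction l as [|a l IH]; intros Hi. auto. unfold csum in *; simpl.
  destruct (Z.eqb_spec a k). subst; simpl in Hi; tauto. rewrite IH. ring. simpl in Hi; tauto. Qed.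

Section Sym.
Variables (alpha beta : Z -> R) (N : nat).
Hypothesis hsupp : forall k : Z, (Z.of_nat N < Z.abs k)%Z -> alpha k = 0%R /\ beta k = 0%R.
Hypothesis hrec : reciprocal invZ2 (Pelt alpha beta N).

Lemma coeff_P (b : bool) k : coeff (Pelt alpha beta N) (b, k) = RtoC (if b then beta k else alpha k).
Proof.
  rewrite coeff_csum, csum_Pelt. simpl.
  transitivity (csum (zrange N) (fun j => if Z.eqb j k then RtoC (if b then beta j else alpha j) else 0)).
  { apply csum_ext. intros j _. unfold elt_eqb; simpl. destruct b; simpl; destruct (Z.eqb j k); simpl; ring. }
  destruct (in_dec Z.eq_dec k (zrange N)) as [Hi|Hi].
  - apply csum_delta_in; auto. apply nodup_zrange.
  - rewrite csum_delta_out; auto. rewrite in_zrange in Hi.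
    destruct (hsupp k) as [H1 H2]. lia. destruct b; rewrite ?H1, ?H2; auto. Qed.

Lemma sym_ab (b : bool) k : (if b then beta (Z.opp k) else alpha (Z.opp k)) = (if b then beta k else alpha k).
Proof. pose proof (hrec (b, k)) as H. unfold invZ2 in H; simpl in H.
  rewrite !coeff_P in H. apply (f_equal fst) in H. simpl in H. auto. Qed.
End Sym.
Lemma coeff_eq alpha beta N
  (hsupp : forall k : Z, (Z.of_nat N < Z.abs k)%Z -> alpha k = 0%R /\ beta k = 0%R)
  (hrec : reciprocal invZ2 (Pelt alpha beta N)) n g :
  coeff (gpow mulZ2 (Pelt alpha beta N) n) g = coeff (gpow mulD (Pelt alpha beta N) n) g.
Proof.
  revert g. induction n as [|n IH]; intro g. reflexivity.
  simpl. rewrite (coeff_gmul _ _ HmZ), (coeff_gmul _ _ HmD).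
  rewrite (csum_ext _ _ (fun a => fst a * coeff (gpow mulD (Pelt alpha beta N) n) (ldivZ (snd a) g)))
    by (intros; rewrite IH; auto).
  generalize (coeff (gpow mulD (Pelt alpha beta N) n)). intro q.
  rewrite !csum_Pelt, !csum_plus. simpl.
  pose proof (sym_ab alpha beta N hsupp hrec) as S.
  destruct g as [[|] gk]; unfold ldivZ, ldivD; simpl.
  all: f_equal; try reflexivity; rewrite csum_neg; apply csum_ext; intros k _;
    pose proof (S false k) as S1; pose proof (S true k) as S2; simpl in S1, S2;
    rewrite ?S1, ?S2; try reflexivity; do 3 f_equal; lia.
Qed.

Close Scope C_scope.
Open Scope R_scope.
Definition nl (p : galg) : R := fold_right Rplus 0%R (map (fun a => Cmod (fst a)) p).

Lemma nl_app p q : nl (p ++ q) = (nl p + nl q)%R.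
Proof. induction p; unfold nl in *; simpl. ring. rewrite IHp. ring. Qed.

Lemma nl_map_scal (mul : elt -> elt -> elt) (a : C * elt) (q : galg) : nl (map (fun b : C * elt => ((fst a * fst b)%C, mul (snd a) (snd b))) q) = Cmod (fst a) * nl q.
Proof. induction q as [|b q IHq]; unfold nl in *; simpl. lra. rewrite IHq, Cmod_mult. lra. Qed.

Lemma nl_gmul mul p q : nl (gmul mul p q) = (nl p * nl q)%R.
Proof. induction p as [|a p IH]; unfold gmul in *; simpl.
  unfold nl; simpl. lra.
  rewrite nl_app, IH, nl_map_scal. unfold nl; simpl. lra. Qed.

Lemma nl_gpow mul p n : nl (gpow mul p n) = (nl p ^ n)%R.
Proof. induction n; simpl. unfold nl; simpl. rewrite Cmod_1. ring.
  rewrite nl_gmul, IHn. ring. Qed.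

Lemma coeff_bound p g : (Cmod (coeff p g) <= nl p)%R.
Proof. induction p as [|a p IH]; unfold coeff, nl in *; simpl.
  rewrite Cmod_0. lra.
  destruct (elt_eqb (snd a) g); simpl.
  - eapply Rle_trans. apply Cmod_triangle. lra.
  - pose proof (Cmod_ge_0 (fst a)). lra. Qed.

Lemma nl_Pelt alpha beta N : nl (Pelt alpha beta N) = l1norm alpha beta N.
Proof. unfold Pelt, l1norm. induction (zrange N) as [|k l IH]; simpl.
  unfold nl; reflexivity.
  rewrite <- IH. unfold nl; simpl. rewrite !Cmod_R. lra. Qed.
Lemma nl_ge0 p : 0 <= nl p.
Proof. induction p; unfold nl in *; simpl. lra. pose proof (Cmod_ge_0 (fst a)). lra. Qed.

Theorem corollary7p4 (alpha beta : Z -> R) (N : nat)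
  (hsupp : forall k : Z, (Z.of_nat N < Z.abs k)%Z -> alpha k = 0%R /\ beta k = 0%R)
  (hrec : reciprocal invZ2 (Pelt alpha beta N))
  (lam : C) (hlam : (Cmod lam * l1norm alpha beta N < 1)%R) :
  exists l : C,
    mahler_is mulZ2 (Pelt alpha beta N) lam l /\
    mahler_is mulD (Pelt alpha beta N) lam l.
Proof.
  set (P := Pelt alpha beta N) in *.
  set (r := (Cmod lam * l1norm alpha beta N)%R) in *.
  assert (HK : 0 <= l1norm alpha beta N) by (rewrite <- nl_Pelt; apply nl_ge0).
  assert (Hr : 0 <= r) by (unfold r; apply Rmult_le_pos; auto; apply Cmod_ge_0).
  set (t := fun n : nat =>
       Copp (Cdiv (Cmult (a_coef mulZ2 P (S n)) (Cpow lam (S n))) (RtoC (INR (S n))))).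
  assert (Hb : forall n, @norm _ C_NormedModule (t n) <= r ^ n).
  { intro n. change (Cmod (t n) <= r ^ n). unfold t.
    rewrite Cmod_opp, Cmod_div, Cmod_mult, Cmod_pow, Cmod_R.
    2: { intro E. apply (f_equal fst) in E. change (INR (S n) = 0) in E. apply (not_0_INR (S n)); auto. }
    pose proof (coeff_bound (gpow mulZ2 P (S n)) elt_one) as Ha.
    rewrite nl_gpow in Ha. unfold P in Ha. rewrite nl_Pelt in Ha. fold P in Ha.
    change (coeff (gpow mulZ2 P (S n)) elt_one) with (a_coef mulZ2 P (S n)) in Ha.
    rewrite Rabs_right by (apply Rle_ge, pos_INR).
    assert (H1 : 1 <= INR (S n)) by (rewrite S_INR; pose proof (pos_INR n); lra).
    set (x := Cmod (a_coef mulZ2 P (S n)) * Cmod lam ^ S n).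
    assert (Hx : 0 <= x) by (unfold x; apply Rmult_le_pos; [apply Cmod_ge_0 | apply pow_le, Cmod_ge_0]).
    apply Rle_trans with x.
    { unfold Rdiv. rewrite <- (Rmult_1_r x) at 2. apply Rmult_le_compat_l. exact Hx. rewrite <- Rinv_1. apply Rinv_le_contravar. lra. exact H1. }
    apply Rle_trans with (r ^ S n).
    { unfold x, r. rewrite Rpow_mult_distr. rewrite Rmult_comm.
      apply Rmult_le_compat_l. apply pow_le, Cmod_ge_0. auto. }
    simpl. pose proof (pow_le r n Hr). nra. }
  assert (Hex : ex_series (V := C_NormedModule) t).
  { apply (ex_series_le t (fun n => r ^ n)). exact Hb. apply ex_series_geom. rewrite Rabs_right; lra. }
  destruct Hex as [l Hl]. exists l. split. exact Hl.
  revert Hl. apply is_series_ext. intro n. unfold t, a_coef. rewrite (coeff_eq alpha beta N hsupp hrec). reflexivity.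
Qed.
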